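(* Assume $Spr(\beta)$. Then $(\mathcal{F}_\beta,=)\models\forall\mathsf{x}[D(\mathsf{x})]$ (i.e. $\forall\alpha,\gamma\in\mathcal{F}_\beta[\alpha=\gamma\vee\neg(\alpha=\gamma)]$) if and only if there exists $\varphi$ with $\varphi:\mathcal{F}_\beta\hookrightarrow\omega$.
   Context: Intuitionistic mathematics (constructive reading of logical constants; Markov's Principle not assumed). Axioms assumed: Brouwer's Continuity Principle (for every $R\subseteq\mathcal{N}\times\omega$, if $\forall\alpha\exists n[\alpha R n]$ then $\forall\alpha\exists m\exists n\forall\beta[\overline{\alpha}m\sqsubset\beta\rightarrow\beta R n]$) and the First Axiom of Continuous Choice (for every $R\subseteq\mathcal{N}\times\omega$, if $\forall\alpha\exists n[\alpha R n]$ then there is $\varphi:\mathcal{N}\rightarrow\omega$, in the sense defined below with $\mathcal{F}_\beta=\mathcal{N}$, such that $\forall\alpha[\alpha R\varphi(\alpha)]$). $\mathcal{N}=\omega^\omega$; finite sequences are coded by naturals, $\overline{\alpha}p=\langle\alpha(0),\dots,\alpha(p-1)\rangle$, $s\sqsubset\alpha$ means $s$ is an initial segment of $\alpha$. $\mathcal{F}_\beta:=\{\alpha\mid\forall n[\beta(\overline{\alpha}n)=0]\}$; $Spr(\beta)$ iff $\forall s[\beta(s)=0\leftrightarrow\exists n[\beta(s\ast\langle n\rangle)=0]]$. $D(\mathsf{x})$ is the formula $\forall\mathsf{y}[\mathsf{x}=\mathsf{y}\vee\neg(\mathsf{x}=\mathsf{y})]$. For $\varphi\in\mathcal{N}$: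 $\varphi:\mathcal{F}_\beta\rightarrow\omega$ iff $\forall\alpha\in\mathcal{F}_\beta\exists p[\varphi(\overline{\alpha}p)\neq0]$, and then $\varphi(\alpha)$ is the $z$ with $\varphi(\overline{\alpha}q)=z+1$ where $q$ is the least $p$ with $\varphi(\overline{\alpha}p)\neq0$. $\varphi:\mathcal{F}_\beta\hookrightarrow\omega$ iff $\varphi:\mathcal{F}_\beta\rightarrow\omega$ and $\forall\alpha,\delta\in\mathcal{F}_\beta[\alpha\#\delta\rightarrow\varphi(\alpha)\neq\varphi(\delta)]$, where $\alpha\#\delta$ means $\exists n[\alpha(n)\neq\delta(n)]$. *)

(* Defs.v *)
From mathcomp Require Import all_boot.
Set Implicit Arguments.
Unset Strict Implicit.
Unset Printing Implicit Defensive.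

Definition baire := nat -> nat.

Definition seqcode (s : seq nat) : nat := CodeSeq.code s.
Definition seqdecode (n : nat) : seq nat := CodeSeq.decode n.

Definition prefix (a : baire) (p : nat) : nat := seqcode (mkseq a p).

Definition ext1 (s n : nat) : nat := seqcode (rcons (seqdecode s) n).

Definition extends_prefix (a : baire) (m : nat) (b : baire) : Prop :=
  forall i, i < m -> b i = a i.

Definition beq (a g : baire) : Prop := forall n, a n = g n.
Definition apart (a g : baire) : Prop := exists n, a n <> g n.

Definition Fb (beta : baire) (a : baire) : Prop := forall n, beta (prefix a n) = 0.

Definition Spr (beta : baire) : Prop :=
  forall s, beta s = 0 <-> exists n, beta (ext1 s n) = 0.

Definition isfun (F : baire -> Prop) (phi : baire) : Prop :=
  forall a, F a -> exists p, phi (prefix a p) <> 0.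

(* phi(alpha) = z : phi(\overline{alpha} q) = z+1 with q least such that it is nonzero *)
Definition fval (phi : baire) (a : baire) (z : nat) : Prop :=
  exists q, phi (prefix a q) = z.+1 /\ forall p, p < q -> phi (prefix a p) = 0.

Definition isinj (F : baire -> Prop) (phi : baire) : Prop :=
  isfun F phi /\
  forall a d, F a -> F d -> apart a d ->
    forall z w, fval phi a z -> fval phi d w -> z <> w.

Definition BCP : Prop :=
  forall R : baire -> nat -> Prop,
    (forall a, exists n, R a n) ->
    forall a, exists m n, forall b, extends_prefix a m b -> R b n.

Definition AC10 : Prop :=
  forall R : baire -> nat -> Prop,
    (forall a, exists n, R a n) ->
    exists phi, isfun (fun _ => True) phi /\ forall a z, fval phi a z -> R a z.

(* Main.v *)
Require Import Defs.
From mathcomp Require Import all_boot.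
Set Implicit Arguments.
Unset Strict Implicit.

Definition nextf (beta f : nat -> nat) (s k : nat) : nat :=
  if beta (ext1 s k) == 0 then k else f s.

Fixpoint rseq (beta f : nat -> nat) (g : baire) (n : nat) : seq nat :=
  match n with
  | 0 => [::]
  | n'.+1 => let s := rseq beta f g n' in rcons s (nextf beta f (seqcode s) (g n'))
  end.

Definition retr beta f (g : baire) : baire := fun i => nth 0 (rseq beta f g i.+1) i.

Lemma size_rseq beta f g n : size (rseq beta f g n) = n.
Proof. by elim: n => //= n IH; rewrite size_rcons IH. Qed.

Lemma rseq_nth beta f g n i : i < n -> nth 0 (rseq beta f g n) i = retr beta f g i.
Proof.
elim: n => // n IH Hi.
rewrite /= nth_rcons size_rseq.
case: (ltngtP i n) => [lt|gt|eq].
- by rewrite IH.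
- by move: Hi; rewrite ltnS leqNgt gt.
- by rewrite eq /retr /= nth_rcons size_rseq ltnn eqxx.
Qed.

Lemma prefix_retr beta f g n : Defs.prefix (retr beta f g) n = seqcode (rseq beta f g n).
Proof.
rewrite /Defs.prefix; congr seqcode.
apply: (@eq_from_nth _ 0); first by rewrite size_mkseq size_rseq.
move=> i; rewrite size_mkseq => Hi; by rewrite nth_mkseq // rseq_nth.
Qed.

Lemma retrF beta f g : beta (seqcode [::]) = 0 ->
  (forall s, beta s = 0 -> beta (ext1 s (f s)) = 0) -> Fb beta (retr beta f g).
Proof.
move=> H0 Hf n; rewrite prefix_retr.
elim: n => //= n IH.
rewrite /nextf; case: eqP => E.
- by move: E; rewrite /ext1 /seqdecode /seqcode CodeSeq.codeK.
- by move: (Hf _ IH); rewrite /ext1 /seqdecode /seqcode CodeSeq.codeK.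
Qed.

Lemma rseq_fix beta f a n : Fb beta a -> rseq beta f a n = mkseq a n.
Proof.
move=> Ha; elim: n => //= n IH.
rewrite IH mkseqS /nextf.
have -> : ext1 (seqcode (mkseq a n)) (a n) = Defs.prefix a n.+1.
  by rewrite /ext1 /seqdecode /seqcode CodeSeq.codeK /Defs.prefix mkseqS.
by rewrite Ha eqxx.
Qed.

Lemma retr_fix beta f a : Fb beta a -> beq (retr beta f a) a.
Proof. by move=> Ha i; rewrite /retr rseq_fix // nth_mkseq. Qed.

Lemma fval_beq phi a g z : beq a g -> fval phi a z -> fval phi g z.
Proof.
move=> E [q [H1 H2]]; have Ep : forall p, Defs.prefix a p = Defs.prefix g p.
  by move=> p; rewrite /Defs.prefix (eq_mkseq E).
by exists q; split; [rewrite -Ep | move=> p Hp; rewrite -Ep; apply: H2].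
Qed.

Lemma fval_uniq phi a z w : fval phi a z -> fval phi a w -> z = w.
Proof.
move=> [q [H1 H2]] [q' [H1' H2']].
case: (ltngtP q q') => [lt|gt|eq].
- by move: (H2' _ lt); rewrite H1.
- by move: (H2 _ gt); rewrite H1'.
- by subst q'; move: H1; rewrite H1' => -[].
Qed.

Lemma fval_ex phi a : (exists p, phi (Defs.prefix a p) <> 0) -> exists z, fval phi a z.
Proof.
move=> H.
have H' : exists p, (fun p => phi (Defs.prefix a p) != 0) p.
  by case: H => p Hp; exists p; apply/eqP.
case: (ex_minnP H') => m /eqP Hm Hmin.
exists (phi (Defs.prefix a m)).-1; exists m; split.
- by case: (phi (Defs.prefix a m)) Hm.
- move=> p Hp; case: (eqVneq (phi (Defs.prefix a p)) 0) => // Hne.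
  by move: (Hmin p Hne); rewrite leqNgt Hp.
Qed.

Unset Implicit Arguments.
Theorem theorem5p11 (beta : baire) :
  BCP -> AC10 -> Spr beta ->
  ((forall a g, Fb beta a -> Fb beta g -> beq a g \/ ~ beq a g) <->
   exists phi, isinj (Fb beta) phi).
Proof.
move=> Hbcp Hac Hspr; split; last first.
  move=> [phi [Hfun Hinj]] a g Ha Hg.
  case: (fval_ex (Hfun a Ha)) => z Hz.
  case: (fval_ex (Hfun g Hg)) => w Hw.
  case: (eqVneq z w) => [Ezw|Nzw].
  - left => n; case: (eqVneq (a n) (g n)) => // /eqP Hn.
    by case: (Hinj a g Ha Hg (ex_intro _ n Hn) z w Hz Hw).
  - right => E; move: (fval_beq E Hz) => Hz'.
    by move: Nzw; rewrite (fval_uniq Hz' Hw) eqxx.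
move=> Hdec.
case: (eqVneq (beta (seqcode [::])) 0) => H0; last first.
  have nF : forall a, ~ Fb beta a by move=> a Ha; move: (Ha 0); apply/eqP.
  exists (fun _ => 1); split; first by move=> a /nF.
  by move=> a d /nF.
have Hf : forall s, {n | beta s = 0 -> beta (ext1 s n) = 0}.
  move=> s; case: (eqVneq (beta s) 0) => Hs; last by exists 0 => /eqP; rewrite (negbTE Hs).
  have ex : exists n, (fun n => beta (ext1 s n) == 0) n.
    by case: (proj1 (Hspr s) Hs) => n Hn; exists n; apply/eqP.
  exists (ex_minn ex) => _; by case: (ex_minnP ex) => m /eqP.
pose f s := sval (Hf s).
have Hf' : forall s, beta s = 0 -> beta (ext1 s (f s)) = 0 by move=> s; exact: (svalP (Hf s)).
have rF : forall g, Fb beta (retr beta f g) by move=> g; exact: retrF.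
have iso : forall al, Fb beta al -> exists m, forall d, Fb beta d ->
    extends_prefix al m d -> beq d al.
  move=> al Hal.
  case: (Hbcp (fun g b => (b = 0 /\ beq (retr beta f g) al) \/
                          (b = 1 /\ ~ beq (retr beta f g) al)) _ al).
    move=> g; case: (Hdec _ _ (rF g) Hal) => h; [exists 0; left | exists 1; right]; done.
  move=> m [b Hb]; exists m.
  have b0 : b = 0.
    case: (Hb al (fun _ _ => erefl)) => [[]//|[_ H]].
    by case: H; exact: retr_fix.
  move=> d Hd Hext; case: (Hb d Hext) => [[_ E]|[E _]]; last by rewrite b0 in E.
  by move=> i; rewrite -(retr_fix f Hd i) E.
case: (Hac (fun g c => exists m, c = Defs.prefix (retr beta f g) m /\
   forall d, Fb beta d -> extends_prefix (retr beta f g) m d -> beq d (retr beta f g))).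
  move=> g; case: (iso _ (rF g)) => m Hm; exists (Defs.prefix (retr beta f g) m); exists m; done.
move=> phi [Hfun HR]; exists phi; split; first by move=> a _; exact: Hfun.
move=> a d Ha Hd [n Hn] z w Hz Hw Hzw; subst w.
case: (HR a z Hz) => m [Ez Hm]; case: (HR d z Hw) => m' [Ez' _].
have Es : mkseq (retr beta f a) m = mkseq (retr beta f d) m'.
  apply: (can_inj CodeSeq.codeK); move: Ez Ez'; rewrite /Defs.prefix /seqcode => -> //.
have Em : m = m' by move: (congr1 size Es); rewrite !size_mkseq.
subst m'.
have Hext : extends_prefix (retr beta f a) m d.
  move=> i Hi; rewrite -(retr_fix f Hd i).
  by move: (congr1 (fun s => nth 0 s i) Es) => /=; rewrite !nth_mkseq.
apply: Hn; rewrite -(retr_fix f Ha n) -(Hm d Hd Hext n) //.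
Qed.
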